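(* Let $S$ be a monoid, and let $G$ be the union of all sets $E$ with $1\in E\subseteq E(S)$ such that $S$ is $E$-protomodal. Then $S$ is $G$-protomodal, and $H\subseteq G$ for every $H$ with $1\in H\subseteq E(S)$ such that $S$ is $H$-protomodal. If $E'$ is maximal right pre-reduced in $G$, then $S$ is a modal left $E'$-monoid; $E'$ is largest possible in the sense that whenever $S$ is a modal left $E$-monoid there is an injective map $e\mapsto e'$ from $E$ into $E'$ with $e\sim_r e'$ for all $e\in E$; and $S$ is in fact an inductive left $E'$-monoid.
   Context: For a semigroup $S$, $E(S)$ is its set of idempotents and $Se=\{ue\mid u\in S\}$; for $e,f\in E(S)$, $e\le_r f$ iff $e=ef$, and $e\sim_r f$ iff $e\le_r f$ and $f\le_r e$. $E\subseteq E(S)$ is right pre-reduced if $e=ef$ and $f=fe$ imply $e=f$ for $e,f\in E$. For $F\subseteq E(S)$, $E$ is maximal right pre-reduced in $F$ if $E\subseteq F$, $E$ is right pre-reduced, and every element of $F$ is $\sim_r$-related to an element of $E$. For $s,t\in S$, $Eq(s,t)=\{u\in S\mid us=ut\}$. For a monoid $S$ and $1\in F\subseteq E(S)$, $S$ is $F$-protomodal if for every $e\in F$ and $s\in S$, $Eq(s,se)$ is non-empty and equals $Sf$ for some $f\in F$. Let $1\in E\subseteq E(S)$. $S$ is a modal left $E$-monoid if $E$ is right pre-reduced and (I1') for all $t\in S$, $e\in E$ there is $t\cdot e\in E$ such that for all $s\in S$: $ste=st$ iff $s(t\cdot e)=s$. $S$ is an inductive left $E$-monoid if it is a modal left $E$-monoid,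 $(E,\le_r)$ is a meet-semilattice with meet $\wedge$, and (I2') for $s\in S$, $e,f\in E$: $se=sf=s$ implies $s(e\wedge f)=s$. *)

(* Defs.v *)
Set Implicit Arguments.

Section Monoid.
Variables (S : Type) (mul : S -> S -> S) (one : S).

Definition is_monoid : Prop :=
  (forall a b c, mul a (mul b c) = mul (mul a b) c) /\
  (forall a, mul one a = a) /\ (forall a, mul a one = a).

Definition idem (e : S) : Prop := mul e e = e.

Definition le_r (e f : S) : Prop := e = mul e f.
Definition sim_r (e f : S) : Prop := le_r e f /\ le_r f e.

Definition lideal (f : S) : S -> Prop := fun u => exists v, u = mul v f.

Definition Eqz (s t : S) : S -> Prop := fun u => mul u s = mul u t.

Definition unital_idem_set (F : S -> Prop) : Prop :=
  F one /\ (forall e, F e -> idem e).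

Definition protomodal (F : S -> Prop) : Prop :=
  unital_idem_set F /\
  forall e s, F e ->
    (exists u, Eqz s (mul s e) u) /\
    exists f, F f /\ forall u, Eqz s (mul s e) u <-> lideal f u.

Definition protomodal_union : S -> Prop :=
  fun e => exists E : S -> Prop, protomodal E /\ E e.

Definition right_pre_reduced (E : S -> Prop) : Prop :=
  forall e f, E e -> E f -> e = mul e f -> f = mul f e -> e = f.

Definition max_right_pre_reduced_in (E F : S -> Prop) : Prop :=
  (forall e, E e -> F e) /\ right_pre_reduced E /\
  forall f, F f -> exists e, E e /\ sim_r f e.

Definition modal_left (E : S -> Prop) : Prop :=
  unital_idem_set E /\ right_pre_reduced E /\
  forall t e, E e -> exists te, E te /\
    forall s, mul (mul s t) e = mul s t <-> mul s te = s.

Definition is_meet_r (E : S -> Prop) (e f m : S) : Prop :=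
  E m /\ le_r m e /\ le_r m f /\
  forall g, E g -> le_r g e -> le_r g f -> le_r g m.

Definition inductive_left (E : S -> Prop) : Prop :=
  modal_left E /\
  exists meet : S -> S -> S,
    (forall e f, E e -> E f -> is_meet_r E e f (meet e f)) /\
    (forall s e f, E e -> E f -> mul s e = s -> mul s f = s ->
        mul s (meet e f) = s).

End Monoid.

(* Main.v *)
Require Import Defs.
From Stdlib Require Import ClassicalEpsilon.

Theorem proposition5p14 (S : Type) (mul : S -> S -> S) (one : S)
  (HS : is_monoid mul one) :
  let G := protomodal_union mul one in
  protomodal mul one G /\
  (forall H : S -> Prop, protomodal mul one H -> forall e, H e -> G e) /\
  (forall E' : S -> Prop, max_right_pre_reduced_in mul E' G ->
     modal_left mul one E' /\
     (forall E : S -> Prop, modal_left mul one E ->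
        exists phi : S -> S,
          (forall e1 e2, E e1 -> E e2 -> phi e1 = phi e2 -> e1 = e2) /\
          (forall e, E e -> E' (phi e) /\ sim_r mul e (phi e))) /\
     inductive_left mul one E').
Proof.
  intros G. destruct HS as [assoc [lid rid]].
  assert (Hlid : forall e u, idem mul e -> (lideal mul e u <-> u = mul u e)).
  { intros e u He; split.
    - intros [v ->]. rewrite <- assoc. unfold idem in He. rewrite He. reflexivity.
    - intro H; exists u; exact H. }
  assert (Hsub : forall H : S -> Prop, protomodal mul one H -> forall e, H e -> G e).
  { intros H PH e He. exists H. split; assumption. }
  assert (HG1 : G one).
  { exists (fun x => x = one). split; [|reflexivity].
    split.
    - split; [reflexivity|]. intros e ->. unfold idem. apply lid.
    - intros e s ->. split.
      + exists one. unfold Eqz. rewrite rid. reflexivity.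
      + exists one. split; [reflexivity|]. intro u. unfold Eqz. rewrite rid.
        split; intros _; [exists u; symmetry; apply rid | reflexivity]. }
  assert (HGidem : forall e, G e -> idem mul e).
  { intros e [E [[[_ HE] _] He]]. apply HE, He. }
  assert (HG : protomodal mul one G).
  { split; [split; assumption|].
    intros e s [E [PE He]].
    destruct PE as [UE PE]. destruct (PE e s He) as [Hex [f [Hf Hff]]].
    split; [exact Hex|]. exists f. split; [|exact Hff].
    exists E. split; [split; assumption | exact Hf]. }
  assert (Hint : forall a b, idem mul a -> G b -> exists g, idem mul g /\
             forall u, lideal mul g u <-> lideal mul a u /\ lideal mul b u).
  { intros a b Ha Hb.
    destruct HG as [_ PG]. destruct (PG b a Hb) as [_ [m [Hm Hmm]]].
    assert (Im : idem mul m) by auto.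
    assert (Hmab : mul m a = mul (mul m a) b).
    { assert (Eqz mul a (mul a b) m) as X by (apply Hmm; apply Hlid; auto; symmetry; exact Im).
      unfold Eqz in X. rewrite <- assoc. exact X. }
    assert (Key : forall u, lideal mul a u -> lideal mul b u -> lideal mul (mul m a) u).
    { intros u Hu1 Hu2. apply Hlid in Hu1; auto. apply Hlid in Hu2; auto.
      assert (Hu3 : lideal mul m u).
      { apply Hmm. unfold Eqz. rewrite assoc. rewrite <- Hu1. exact Hu2. }
      apply Hlid in Hu3; auto. exists u. rewrite assoc. rewrite <- Hu3. exact Hu1. }
    assert (Hin1 : lideal mul a (mul m a)) by (apply Hlid; auto; rewrite <- assoc, Ha; reflexivity).
    assert (Hin2 : lideal mul b (mul m a)) by (apply Hlid; auto).
    assert (Ig : idem mul (mul m a)).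
    { assert (X := Key _ Hin1 Hin2).
      assert (Y : lideal mul m (mul m a)).
      { apply Hmm. unfold Eqz. rewrite (assoc (mul m a) a b).
        rewrite <- (assoc m a a), Ha. exact Hmab. }
      apply Hlid in Y; auto. unfold idem. rewrite assoc. rewrite <- Y.
      rewrite <- assoc, Ha. reflexivity. }
    exists (mul m a). split; [exact Ig|]. intro u; split.
    - intros Hu. apply Hlid in Hu; auto. split.
      + apply Hlid; auto. rewrite Hu at 2. rewrite <- !assoc. rewrite Ha. exact Hu.
      + apply Hlid; auto. rewrite Hu at 2. rewrite <- !assoc. rewrite (assoc m a b).
        rewrite <- Hmab. exact Hu.
    - intros [H1 H2]. apply Key; assumption. }
  assert (Hsim : forall f g u, idem mul f -> idem mul g -> sim_r mul f g ->
            (lideal mul f u <-> lideal mul g u)).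
  { intros f g u If Ig [H1 H2].
    rewrite (Hlid f u If), (Hlid g u Ig). split; intro Hu.
    - rewrite Hu at 2. rewrite <- assoc, <- H1. exact Hu.
    - rewrite Hu at 2. rewrite <- assoc, <- H2. exact Hu. }
  set (H := fun g => idem mul g /\ exists a b, G a /\ G b /\ forall u, lideal mul g u <-> lideal mul a u /\ lideal mul b u).
  assert (PH : protomodal mul one H).
  { split.
    - split.
      + split; [unfold idem; apply lid|]. exists one, one. split; [exact HG1|].
        split; [exact HG1|]. intro u. tauto.
      + intros e [He _]. exact He.
    - intros g s [Ig [a [b [Ga [Gb Hab]]]]].
      destruct HG as [_ PG].
      destruct (PG a s Ga) as [_ [a' [Ga' Ha']]].
      destruct (PG b s Gb) as [_ [b' [Gb' Hb']]].
      destruct (Hint a' b' (HGidem a' Ga') Gb') as [g0 [Ig0 Hg0]].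
      assert (Main : forall u, Eqz mul s (mul s g) u <-> lideal mul g0 u).
      { intro u. unfold Eqz. rewrite Hg0, <- Ha', <- Hb'. unfold Eqz.
        rewrite !assoc.
        assert (E1 := Hlid g (mul u s) Ig).
        assert (E2 := Hlid a (mul u s) (HGidem a Ga)).
        assert (E3 := Hlid b (mul u s) (HGidem b Gb)).
        rewrite <- E1, Hab, E2, E3. tauto. }
      split.
      + exists g0. apply Main. apply Hlid; auto; symmetry; exact Ig0.
      + exists g0. split; [|exact Main]. split; [exact Ig0|].
        exists a', b'. auto. }
  assert (HHG : forall g, H g -> G g) by (apply Hsub; exact PH).
  split; [exact HG|]. split; [exact Hsub|].
  intros E' [sub [rpr cover]].
  assert (E'1 : E' one).
  { destruct (cover one HG1) as [e [He [H1 H2]]]. unfold le_r in H1. rewrite lid in H1. subst e. exact He. }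
  assert (ModE' : modal_left mul one E').
  { split; [split; [exact E'1| intros e He; apply HGidem, sub, He]|].
    split; [exact rpr|].
    intros t e He. destruct HG as [_ PG].
    destruct (PG e t (sub e He)) as [_ [f [Gf Hf]]].
    destruct (cover f Gf) as [f' [Hf' Sf]].
    exists f'. split; [exact Hf'|]. intro s.
    assert (X := Hf s). unfold Eqz in X.
    rewrite (Hsim f f' s (HGidem f Gf) (HGidem f' (sub f' Hf')) Sf) in X.
    rewrite (Hlid f' s (HGidem f' (sub f' Hf'))) in X.
    rewrite <- assoc. split; intro Y; [symmetry; apply X; symmetry; exact Y|].
    symmetry. apply X. symmetry. exact Y. }
  split; [exact ModE'|]. split.
  - intros E [[E1 IE] [rprE ME]].
    assert (PE : protomodal mul one E).
    { split; [split; assumption|]. intros e s He.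
      destruct (ME s e He) as [te [Hte Pte]].
      assert (Main : forall u, Eqz mul s (mul s e) u <-> lideal mul te u).
      { intro u. unfold Eqz. rewrite (Hlid te u (IE te Hte)). rewrite assoc.
        specialize (Pte u). split; intro X.
        - symmetry. apply Pte. symmetry. exact X.
        - symmetry. apply Pte. symmetry. exact X. }
      split.
      + exists te. apply Main. apply Hlid; auto; symmetry; apply IE; exact Hte.
      + exists te. split; assumption. }
    assert (EG : forall e, E e -> G e) by (apply Hsub; exact PE).
    exists (fun x => epsilon (inhabits one) (fun y => E' y /\ sim_r mul x y)).
    assert (Spec : forall e, E e -> E' (epsilon (inhabits one) (fun y => E' y /\ sim_r mul e y))
                     /\ sim_r mul e (epsilon (inhabits one) (fun y => E' y /\ sim_r mul e y))).
    { intros e He. apply epsilon_spec. apply cover. apply EG, He. }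
    split; [|exact Spec].
    intros e1 e2 H1 H2 Heq.
    destruct (Spec e1 H1) as [_ [A1 B1]]. destruct (Spec e2 H2) as [_ [A2 B2]].
    unfold le_r in *. rewrite Heq in A1, B1.
    set (p := epsilon (inhabits one) (fun y => E' y /\ sim_r mul e2 y)) in *.
    apply rprE; auto.
    + rewrite A1 at 1. rewrite B2 at 1. rewrite assoc, <- A1. reflexivity.
    + rewrite A2 at 1. rewrite B1 at 1. rewrite assoc, <- A2. reflexivity.
  - split; [exact ModE'|].
    set (P := fun e f m => E' m /\ forall u, lideal mul m u <-> lideal mul e u /\ lideal mul f u).
    assert (Ex : forall e f, E' e -> E' f -> exists m, P e f m).
    { intros e f He Hf.
      destruct (Hint e f (HGidem e (sub e He)) (sub f Hf)) as [g [Ig Hg]].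
      assert (Gg : G g).
      { apply HHG. split; [exact Ig|]. exists e, f. split; [apply sub, He|].
        split; [apply sub, Hf| exact Hg]. }
      destruct (cover g Gg) as [g' [Hg' Sg]].
      exists g'. split; [exact Hg'|]. intro u.
      rewrite <- (Hsim g g' u Ig (HGidem g' (sub g' Hg')) Sg). apply Hg. }
    exists (fun e f => epsilon (inhabits one) (P e f)).
    assert (Spec : forall e f, E' e -> E' f -> P e f (epsilon (inhabits one) (P e f))).
    { intros e f He Hf. apply epsilon_spec. apply Ex; assumption. }
    split.
    + intros e f He Hf. destruct (Spec e f He Hf) as [Hm Pm].
      set (m := epsilon (inhabits one) (P e f)) in *.
      assert (Im : idem mul m) by (apply HGidem, sub, Hm).
      assert (Ie : idem mul e) by (apply HGidem, sub, He).
      assert (If : idem mul f) by (apply HGidem, sub, Hf).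
      assert (Mm : lideal mul m m) by (apply Hlid; auto; symmetry; exact Im).
      apply Pm in Mm. destruct Mm as [M1 M2].
      split; [exact Hm|]. split; [apply Hlid; auto|]. split; [apply Hlid; auto|].
      intros g Hg L1 L2. unfold le_r. apply Hlid; auto. apply Pm.
      split; apply Hlid; auto.
    + intros s e f He Hf H1 H2. destruct (Spec e f He Hf) as [Hm Pm].
      symmetry. apply Hlid; [apply HGidem, sub, Hm|]. apply Pm.
      split; apply Hlid; [apply HGidem, sub, He | symmetry; exact H1
                         | apply HGidem, sub, Hf | symmetry; exact H2].
Qed.
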